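(* For every integer $m\ge3$ there is a binary minimal self-orthogonal linear code with parameters $[3\cdot2^{m-1}-1,\ m,\ 2^{m-1}]_2$ and maximum weight $2^m$ (constructed from the binary simplex $[2^m-1,m,2^{m-1}]_2$ code) which violates the Ashikhmin–Barg condition.
   Context: A code $\mathbf{C}$ is self-orthogonal if $\mathbf{C}\subseteq\mathbf{C}^\perp$ for the standard inner product. A binary linear code is minimal if any two nonzero codewords $\mathbf{c},\mathbf{c}'$ with $supp(\mathbf{c}')\subseteq supp(\mathbf{c})$ are equal. Ashikhmin–Barg condition (binary): $w_{min}/w_{max}>1/2$, where $w_{min},w_{max}$ are the minimum and maximum weights of nonzero codewords. The binary simplex code of dimension $m$ is generated by the $m\times(2^m-1)$ matrix whose columns are all nonzero vectors of $\mathbf{F}_2^m$. *)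

(* Defs.v *)
From HB Require Import structures.
From mathcomp Require Import all_boot all_order all_algebra all_field.
Set Implicit Arguments. Unset Strict Implicit. Unset Printing Implicit Defensive.
Import Order.TTheory GRing.Theory Num.Theory.
Local Open Scope ring_scope.

Notation bcode n := {vspace 'rV['F_2]_n}.

Definition supp n (c : 'rV['F_2]_n) : {set 'I_n} := [set i | c 0 i != 0].
Definition wt n (c : 'rV['F_2]_n) : nat := #|supp c|.

Definition inner n (c c' : 'rV['F_2]_n) : 'F_2 := \sum_(i < n) c 0 i * c' 0 i.

Definition self_orthogonal n (C : bcode n) : Prop :=
  forall c c', c \in C -> c' \in C -> inner c c' = 0.

Definition minimal_code n (C : bcode n) : Prop :=
  forall c c', c \in C -> c' \in C -> c != 0 -> c' != 0 ->
    supp c' \subset supp c -> c' = c.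

Definition is_wmin n (C : bcode n) (w : nat) : Prop :=
  (exists2 c, c \in C & (c != 0) && (wt c == w)) /\
  (forall c, c \in C -> c != 0 -> (w <= wt c)%N).
Definition is_wmax n (C : bcode n) (w : nat) : Prop :=
  (exists2 c, c \in C & (c != 0) && (wt c == w)) /\
  (forall c, c \in C -> c != 0 -> (wt c <= w)%N).

Definition ashikhmin_barg n (C : bcode n) : Prop :=
  forall wmin wmax, is_wmin C wmin -> is_wmax C wmax ->
    (1 / 2 : rat) < (wmin%:R / wmax%:R : rat).

(* Main.v *)
Require Import Defs.
From HB Require Import structures.
From mathcomp Require Import all_boot all_order all_algebra all_field.
From mathcomp Require Import ring zify.
Import Order.TTheory GRing.Theory Num.Theory.
Local Open Scope ring_scope.
Set Implicit Arguments. Unset Strict Implicit. Unset Printing Implicit Defensive.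

Lemma F2_cases (a : 'F_2) : a = 0 \/ a = 1.
Proof. by case: a => [[|[|]]] //= ?; [left|right]; apply/val_inj. Qed.

Lemma split_l a b (i : 'I_a) : split (lshift b i) = inl i.
Proof. exact: (unsplitK (inl _ i)). Qed.
Lemma split_r a b (i : 'I_b) : split (rshift a i) = inr i.
Proof. exact: (unsplitK (inr _ i)). Qed.

Lemma wt_sum n (c : 'rV['F_2]_n) : wt c = (\sum_i nat_of_bool (c ord0 i != 0%R))%N.
Proof.
rewrite /wt /supp -sum1_card big_mkcond /=; apply: eq_bigr => i _.
by rewrite inE; case: (_ != _).
Qed.

Lemma innerDr n (u x y : 'rV['F_2]_n) : inner u (x + y) = inner u x + inner u y.
Proof. by rewrite /inner -big_split; apply: eq_bigr => i _; rewrite mxE mulrDr. Qed.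

Lemma inner_delta n (u : 'rV['F_2]_n) i : inner u (delta_mx 0 i) = u 0 i.
Proof.
rewrite /inner (bigD1 i) //= big1 ?addr0; first by rewrite mxE !eqxx mulr1.
by move=> j /negbTE ji; rewrite mxE ji andbF mulr0.
Qed.

Lemma inner0 n (u : 'rV['F_2]_n) : inner u 0 = 0.
Proof. by rewrite /inner big1 // => i _; rewrite mxE mulr0. Qed.

Lemma inner0l n (u : 'rV['F_2]_n) : inner 0 u = 0.
Proof. by rewrite /inner big1 // => i _; rewrite mxE mul0r. Qed.

Lemma count_half m (u : 'rV['F_2]_m) : u != 0 ->
  ((\sum_(x : 'rV['F_2]_m) nat_of_bool (inner u x != 0%R)) * 2 = 2 ^ m)%N.
Proof.
move=> u0.
have [i ui] : exists i, u 0 i != 0.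
  apply/existsP; apply: contraR u0 => /existsPn H; apply/eqP/rowP => j.
  by rewrite mxE; move: (H j); rewrite negbK => /eqP.
set d : 'rV['F_2]_m := delta_mx 0 i.
have ud : inner u d = 1 by rewrite inner_delta; case: (F2_cases (u 0 i)) ui => ->.
have E : (\sum_(x : 'rV['F_2]_m) nat_of_bool (inner u x != 0%R) =
          \sum_(x : 'rV['F_2]_m) nat_of_bool (~~ (inner u x != 0%R)))%N.
  rewrite (reindex_inj (addIr d)) /=; apply: eq_bigr => x _.
  by rewrite innerDr ud; case: (F2_cases (inner u x)) => ->.
rewrite muln2 -addnn {1}E -big_split /=.
rewrite (eq_bigr (fun _ => 1%N)); last by move=> x _; rewrite addn_negb.
by rewrite sum1_card card_mx card_Fp // mul1n.
Qed.


Lemma F2_mul (a b : 'F_2) : a * b = ((a != 0) && (b != 0))%:R.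
Proof. by case: (F2_cases a) => ->; case: (F2_cases b) => ->; apply/val_inj. Qed.

Lemma F2_add (a b : 'F_2) :
  (nat_of_bool (a != 0%R) + nat_of_bool (b != 0%R) =
   2 * nat_of_bool ((a != 0%R) && (b != 0%R)) + nat_of_bool (a + b != 0%R)%R)%N.
Proof. by case: (F2_cases a) => ->; case: (F2_cases b) => ->. Qed.

Lemma inner_wt n (c c' : 'rV['F_2]_n) : exists S,
  inner c c' = S%:R /\ (wt c + wt c' = 2 * S + wt (c + c'))%N.
Proof.
exists (\sum_i nat_of_bool ((c ord0 i != 0%R) && (c' ord0 i != 0%R)))%N; split.
  by rewrite /inner natr_sum; apply: eq_bigr => i _; rewrite F2_mul.
rewrite !wt_sum -big_split /= big_distrr -big_split /=.
by apply: eq_bigr => i _; rewrite F2_add mxE.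
Qed.

Section Constr.
Variable m : nat.
Hypothesis hm : (2 < m)%N.
Local Notation V := 'rV['F_2]_m.
Local Notation k := (2 ^ m.-1)%N.

Definition i0 : 'I_m := @Ordinal m 0 (ltnW (ltnW hm)).
Definition i1 : 'I_m := @Ordinal m 1 (ltnW hm).
Definition e0 : V := delta_mx 0 i0.
Definition e1 : V := delta_mx 0 i1.
Definition h0 : 'I_#|V| := enum_rank (0 : V).
Definition nn := (#|V|.-1 + k)%N.
Definition col (j : 'I_nn) : V :=
  match split j with inl a => enum_val (lift h0 a) | inr _ => e0 end.
Definition G : 'M['F_2]_(m, nn) := \matrix_(i, j) col j 0 i.

Lemma codeE u j : (u *m G) 0 j = inner u (col j).
Proof. by rewrite !mxE /inner; apply: eq_bigr => i _; rewrite mxE. Qed.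

Lemma count_col (P : pred V) : P 0 = false ->
  (\sum_(j < nn) nat_of_bool (P (col j)) =
   \sum_(x : V) nat_of_bool (P x) + k * P e0)%N.
Proof.
move=> P0; rewrite big_split_ord /=; congr (_ + _)%N.
  under eq_bigr => a _ do rewrite /col split_l.
  rewrite [RHS](big_enum_val (A := predT)) /=.
  rewrite [RHS](bigD1_ord h0) //= /h0 enum_rankK P0.
  by [].
under eq_bigr => a _ do rewrite /col split_r.
by rewrite sum_nat_const card_ord mulnC.
Qed.


Lemma k2 : (2 ^ m = k * 2)%N.
Proof. by rewrite -expnSr prednK // (leq_trans _ hm). Qed.

Lemma wt_code (u : V) : wt (u *m G) = ((u != 0%R) * k + k * (inner u e0 != 0%R))%N.
Proof.
rewrite wt_sum; under eq_bigr do rewrite codeE.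
rewrite (@count_col (fun x => inner u x != 0)) /=; last by rewrite inner0 eqxx.
congr (_ + _)%N; case: eqP => [->|/eqP u0].
  by rewrite mul0n big1 // => x _; rewrite inner0l eqxx.
by apply/eqP; rewrite mul1n -(eqn_pmul2r (isT : (0 < 2)%N)) count_half // k2.
Qed.

Definition f : 'Hom(V, 'rV['F_2]_nn) := linfun (mulmxr G).
Definition C : bcode nn := limg f.

Lemma memC c : reflect (exists u, c = u *m G) (c \in C).
Proof.
apply: (iffP memv_imgP) => [[u _ ->]|[u ->]]; exists u; rewrite ?lfunE //.
by rewrite memvf.
Qed.

Lemma wt_pos (u : V) : u != 0 -> (0 < wt (u *m G))%N.
Proof. by move=> u0; rewrite wt_code u0 mul1n ltn_addr // expn_gt0. Qed.

Lemma code0 (u : V) : (u *m G == 0) = (u == 0).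
Proof.
apply/eqP/eqP => [H|->]; last by rewrite mul0mx.
case: (eqVneq u 0) => // /wt_pos; rewrite H.
by rewrite wt_sum big1 // => i _; rewrite mxE eqxx.
Qed.

Lemma e0_neq0 : e0 != 0.
Proof. by apply/eqP => /rowP /(_ i0); rewrite !mxE !eqxx. Qed.
Lemma e1_neq0 : e1 != 0.
Proof. by apply/eqP => /rowP /(_ i1); rewrite !mxE !eqxx. Qed.
Lemma inner_e1e0 : inner e1 e0 = 0.
Proof. by rewrite inner_delta mxE. Qed.
Lemma inner_e0e0 : inner e0 e0 = 1.
Proof. by rewrite inner_delta mxE !eqxx. Qed.

Lemma dimC : \dim C = m.
Proof.
rewrite /C limg_dim_eq; first by rewrite dimvf dim_matrix mul1r.
have /eqP -> : lker f == 0%VS.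
  apply/lker0P => u v; rewrite !lfunE /= => E.
  by apply/eqP; rewrite -subr_eq0 -code0 mulmxBl E subrr.
by rewrite capv0.
Qed.

Lemma k4 : (4 %| k)%N.
Proof.
have -> : m.-1 = (m.-1 - 2 + 2)%N by rewrite subnK // -ltnS prednK // (leq_trans _ hm).
by rewrite expnD dvdn_mull.
Qed.

Lemma wt4 c : c \in C -> (4 %| wt c)%N.
Proof.
case/memC => u ->; rewrite wt_code.
apply: dvdn_add; [apply: dvdn_mull | apply: dvdn_mulr]; exact: k4.
Qed.

Lemma selforth : self_orthogonal C.
Proof.
move=> c c' cC c'C; have [S [-> E]] := inner_wt c c'.
have : (4 %| 2 * S)%N.
  have := wt4 (memvD cC c'C); have := wt4 cC; have := wt4 c'C.
  move=> /dvdnP[a Ha] /dvdnP[b Hb] /dvdnP[d Hd]; move: E; rewrite Ha Hb Hd => E.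
  apply/dvdnP; exists (a + b - d)%N; lia.
rewrite (_ : 4 = 2 * 2)%N // dvdn_pmul2l // => /dvdnP[q ->].
by rewrite natrM (_ : (2%:R : 'F_2) = 0) ?mulr0 //; apply/val_inj.
Qed.

Lemma cover x : x != 0 -> exists j, col j = x.
Proof.
move=> x0; have := @count_col (pred1 x); rewrite /= eq_sym (negbTE x0) => /(_ erefl).
case: (pickP (fun j => col j == x)) => [j /eqP|none]; first by exists j.
rewrite big1 => [|j _]; last by rewrite none.
by rewrite (bigD1 x) //= eqxx.
Qed.

Lemma minC : minimal_code C.
Proof.
move=> c c' /memC[u ->] /memC[v ->]; rewrite !code0 => u0 v0 sub.
have imp : forall x, inner v x != 0 -> inner u x != 0.
  move=> x; case: (eqVneq x 0) => [->|/cover[j <-]]; first by rewrite inner0 eqxx.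
  move=> H; have : j \in supp (v *m G) by rewrite inE codeE.
  by move/(subsetP sub); rewrite inE codeE.
have eqs : forall x, (inner v x != 0) = (inner u x != 0).
  have L := @leqif_sum _ predT
    (fun x => nat_of_bool (inner v x != 0) == nat_of_bool (inner u x != 0))
    (fun x => nat_of_bool (inner v x != 0)) (fun x => nat_of_bool (inner u x != 0)).
  have H : forall x, predT x -> (nat_of_bool (inner v x != 0%R) <= nat_of_bool (inner u x != 0%R)
           ?= iff (nat_of_bool (inner v x != 0%R) == nat_of_bool (inner u x != 0%R)))%N.
    move=> x _; apply: leqif_eq; move: (imp x).
    by case: (inner v x != 0); case: (inner u x != 0) => // /(_ isT).
  have := (L H).2.
  have -> : (\sum_(i | predT i) nat_of_bool (inner v i != 0%R) ==
             \sum_(i | predT i) nat_of_bool (inner u i != 0%R))%N.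
    by rewrite -(eqn_pmul2r (isT : (0 < 2)%N)) !count_half.
  move=> /esym /forallP F x; move: (F x) => /= /eqP.
  by case: (inner v x != 0); case: (inner u x != 0).
have -> : v = u.
  apply/rowP => i; have := eqs (delta_mx 0 i); rewrite !inner_delta.
  by case: (F2_cases (v 0 i)) => ->; case: (F2_cases (u 0 i)) => ->.
by [].
Qed.

Lemma main_gen : exists C : bcode nn,
    [/\ \dim C = m /\ is_wmin C (2 ^ m.-1)%N,
        is_wmax C (2 ^ m)%N,
        self_orthogonal C,
        minimal_code C
      & ~ ashikhmin_barg C].
Proof.
have wmin : is_wmin C k.
  split.
    exists (e1 *m G); first by apply/memC; exists e1.
    by rewrite code0 e1_neq0 wt_code e1_neq0 inner_e1e0 eqxx /= muln0 addn0 mul1n.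
  move=> c /memC[u ->]; rewrite code0 => u0.
  by rewrite wt_code u0 mul1n leq_addr.
have wmax : is_wmax C (2 ^ m)%N.
  split.
    exists (e0 *m G); first by apply/memC; exists e0.
    by rewrite code0 e0_neq0 wt_code e0_neq0 inner_e0e0 oner_eq0 /= k2 muln2 -addnn mul1n muln1.
  move=> c /memC[u ->] _; rewrite wt_code k2 muln2 -addnn leq_add //.
    by case: (u != 0); rewrite ?mul1n ?mul0n.
  by case: (_ != _); rewrite ?muln1 ?muln0.
exists C; split; [split; [exact: dimC | exact: wmin] | exact: wmax | exact: selforth | exact: minC |].
move=> AB; have := AB _ _ wmin wmax.
have kn0 : (k%:R : rat) != 0 by rewrite pnatr_eq0 expn_eq0.
rewrite k2 natrM invfM mulrA mulfV // mul1r.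
Qed.

End Constr.

Theorem proposition5p2 (m : nat) (hm : (3 <= m)%N) :
  exists C : bcode (3 * 2 ^ m.-1 - 1)%N,
    [/\ \dim C = m /\ is_wmin C (2 ^ m.-1)%N,
        is_wmax C (2 ^ m)%N,
        self_orthogonal C,
        minimal_code C
      & ~ ashikhmin_barg C].
Proof.
have E : (3 * 2 ^ m.-1 - 1 = nn m)%N.
  rewrite /nn card_mx card_Fp // mul1n.
  have -> : (2 ^ m = 2 * 2 ^ m.-1)%N by rewrite -expnS prednK // (leq_trans _ hm).
  have : (0 < 2 ^ m.-1)%N by rewrite expn_gt0.
  lia.
rewrite E; exact: main_gen.
Qed.
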